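(* For every $r\in\mathbb{N}$ there exist moulds ${}_r\mathrm{Poin}^\bullet$ on $\mathcal{A}(F)$ and ${}_r\mathrm{poin}^\bullet$ on $A(F)$ such that $$F^r_{\rm Poin}=F_{\rm lin}\Big(\sum_{\mathbf{m}}{}_r\mathrm{Poin}^{\mathbf{m}}D_{\mathbf{m}}\Big)=F_{\rm lin}\Big(\sum_{\mathbf{n}}{}_r\mathrm{poin}^{\mathbf{n}}B_{\mathbf{n}}\Big).$$
   Context: Fix $\nu\ge1$, $\lambda\in\mathbb{C}^\nu$, $\lambda\cdot m=\sum_i\lambda_im_i$, $|m|=m_1+\dots+m_\nu$. Let $f(x)=(e^{\lambda_1}x_1,\dots,e^{\lambda_\nu}x_\nu)+h(x)$ be a local analytic diffeomorphism of $(\mathbb{C}^\nu,0)$, $F(\varphi)=\varphi\circ f$ on $\mathbb{C}[[x]]$, $F_{\rm lin}(x^m)=e^{\lambda\cdot m}x^m$. An operator is homogeneous of degree $n\in\mathbb{Z}^\nu$ if it maps each $x^k$ to a multiple of $x^{k+n}$. Write $F=F_{\rm lin}(\mathrm{Id}+\sum_{n\in A(F)}B_n)=F_{\rm lin}\exp(\sum_{m\in\mathcal{A}(F)}D_m)$ with $B_n$ homogeneous of degree $n$ and $D_m$ homogeneous derivations of degree $m$; $A(F),\mathcal{A}(F)\subset\mathbb{Z}^\nu$ are taken closed under addition (degrees with zero operator allowed). Words: $B_{\mathbf{n}}=B_{n_1}\circ\cdots\circ B_{n_r}$, $D_{\mathbf{m}}$ likewise, identity on the empty word; moulds are complex-valued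 functions on words; sums are formal. Poincaré normal form up to order $r$: $F^0_{\rm Poin}=F$; given $F^{i-1}_{\rm Poin}=F_{\rm lin}\exp(\sum_m{}_iD_m)$ with ${}_iD_m$ its homogeneous derivation components of degree $m$, let $N^{(i)}_k=\{m:{}_iD_m\neq0,\ |m|=k,\ e^{\lambda\cdot m}\neq1\}$, $K_i=\min\{k\ge1:N^{(i)}_k\neq\emptyset\}$, $\mathbf{S}_i=\sum_{m\in N^{(i)}_{K_i}}{}_iD_m/(1-e^{\lambda\cdot m})$, and $F^i_{\rm Poin}=\exp(\mathbf{S}_i)\circ F^{i-1}_{\rm Poin}\circ\exp(-\mathbf{S}_i)$. *)

(* Defs.v *)
From mathcomp Require Import all_boot all_order all_algebra.
From mathcomp Require Import all_classical all_reals all_analysis.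
From mathcomp.real_closed Require Import complex.
Set Implicit Arguments. Unset Strict Implicit. Unset Printing Implicit Defensive.
Import Order.TTheory GRing.Theory Num.Theory.
Local Open Scope ring_scope.

Section PoincareMoulds.
Variables (R : realType) (nu : nat).
Local Notation C := (R[i]).

Definition cexp (z : C) : C :=
  Complex (expR (complex.Re z) * cos (complex.Im z))
          (expR (complex.Re z) * sin (complex.Im z)).

(* multi-indices k in N^nu (exponents of monomials x^k) and degrees in Z^nu *)
Definition mi := {ffun 'I_nu -> nat}.
Definition deg := {ffun 'I_nu -> int}.
Definition mtot (k : mi) : nat := (\sum_(i < nu) k i)%N.
Definition dtot (m : deg) : int := \sum_(i < nu) m i.
Definition mdeg (k : mi) : deg := [ffun i => (k i)%:Z].
Definition mdiff (l k : mi) : deg := [ffun i => (l i)%:Z - (k i)%:Z].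
Definition mzero : mi := [ffun _ => 0%N].
Definition unitmi (i : 'I_nu) : mi := [ffun j => nat_of_bool (j == i)].

Definition mbox (N : nat) : seq mi :=
  [seq k <- [seq [ffun i => nat_of_ord (j i)] | j : {ffun 'I_nu -> 'I_N.+1}]
     | (mtot k <= N)%N].

(* formal power fseries C[[x_1..x_nu]]: coefficient functions *)
Definition fseries := mi -> C.
Definition sone : fseries := fun l => (l == mzero)%:R.
Definition smul (a b : fseries) : fseries := fun l =>
  \sum_(j <- mbox (mtot l) | [forall i, (j i <= l i)%N]) a j * b [ffun i => (l i - j i)%N].
Definition spow (a : fseries) (n : nat) : fseries := iter n (smul a) sone.

(* operators on C[[x]], represented by their action on monomials:
   T k l = coefficient of x^l in T(x^k). *)
Definition op := mi -> mi -> C.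
Definition opid : op := fun k l => (k == l)%:R.
Definition opadd (T U : op) : op := fun k l => T k l + U k l.
Definition opopp (T : op) : op := fun k l => - T k l.
(* composition T o U (first U, then T); the intermediate sum is restricted to
   monomials of total degree <= |l|, which is exact for operators T that do not
   decrease the order (all operators occurring below). *)
Definition opcomp (T U : op) : op := fun k l =>
  \sum_(j <- mbox (mtot l)) U k j * T j l.
Definition oppow (T : op) (n : nat) : op := iter n (opcomp T) opid.
(* exp and log of order-increasing operators (finite sums coefficientwise) *)
Definition opexp (D : op) : op := fun k l =>
  \sum_(n < (mtot l - mtot k).+1) oppow D n k l / (n`!)%:R.
Definition oplog (N : op) : op := fun k l =>
  \sum_(n < (mtot l - mtot k).+1 | (0 < n)%N) (-1) ^+ n.+1 * oppow N n k l / n%:R.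
Definition hom (T : op) (n : deg) : op := fun k l =>
  if mdiff l k == n then T k l else 0.
Definition op_nonzero (T : op) : Prop := exists k l, T k l != 0.

Section Diffeo.
Variables (lam : 'I_nu -> C) (h : 'I_nu -> fseries).

Definition elam (m : deg) : C := cexp (\sum_(i < nu) lam i * (m i)%:~R).

(* components of f(x) = (e^{lam_1} x_1, ..., e^{lam_nu} x_nu) + h(x) *)
Definition fcomp (i : 'I_nu) : fseries := fun l =>
  cexp (lam i) * (l == unitmi i)%:R + h i l.

(* F(phi) = phi o f ; F(x^k) = prod_i f_i^{k_i} *)
Definition Fop : op := fun k =>
  foldr smul sone [seq spow (fcomp i) (k i) | i <- enum 'I_nu].
Definition Flin : op := fun k l => (k == l)%:R * elam (mdeg k).
Definition Flininv : op := fun k l => (k == l)%:R / elam (mdeg k).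

(* For G = F_lin (Id + sum_n B_n): the operator sum_n B_n = F_lin^{-1} G - Id *)
Definition Bpart (G : op) : op := opadd (opcomp Flininv G) (opopp opid).
(* For G = F_lin exp(sum_m D_m): the operator sum_m D_m = log(F_lin^{-1} G) *)
Definition Dpart (G : op) : op := oplog (Bpart G).

Definition Bfam (n : deg) : op := hom (Bpart Fop) n.
Definition Dfam (m : deg) : op := hom (Dpart Fop) m.

Definition Nnonempty (G : op) (k : nat) : Prop :=
  exists m : deg, [/\ op_nonzero (hom (Dpart G) m), dtot m = k%:Z & elam m != 1].

Definition Kmin (G : op) : option nat :=
  match pselect (exists k, (0 < k)%N /\ Nnonempty G k) with
  | left ex =>
      Some (@ex_minn (fun k => `[< (0 < k)%N /\ Nnonempty G k >])
              (let: ex_intro k Hk := ex in ex_intro _ k (asboolT Hk)))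
  | right _ => None
  end.

Definition Sop (G : op) : op := fun k l =>
  match Kmin G with
  | Some K => if (dtot (mdiff l k) == K%:Z) && (elam (mdiff l k) != 1)
              then hom (Dpart G) (mdiff l k) k l / (1 - elam (mdiff l k)) else 0
  | None => 0
  end.

Definition PoinStep (G : op) : op :=
  opcomp (opcomp (opexp (Sop G)) G) (opexp (opopp (Sop G))).

Definition FPoin (r : nat) : op := iter r PoinStep Fop.

End Diffeo.

(* formal mould sums sum_{w in A*} M^w Op_w, with Op_w = Op_{w1} o ... o Op_{wr}.
   Applied to x^k, a word w = (n1,...,nr) gives the chain of monomials
   k -> k+nr -> k+nr+n(r-1) -> ... ; only chains of strictly increasing
   total degree (all ending at l) can contribute. *)
Fixpoint allseqs (T : Type) (n : nat) (s : seq T) : seq (seq T) :=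
  if n is n'.+1 then [seq x :: t | x <- s, t <- allseqs n' s] else [:: [::]].

Definition chain_steps (c : seq mi) : seq (mi * mi) := zip c (behead c).
Definition chain_word (c : seq mi) : seq deg :=
  rev [seq mdiff p.2 p.1 | p <- chain_steps c].

Definition mould_sum (A : pred deg) (M : seq deg -> C) (Op : deg -> op) : op :=
  fun k l =>
    M [::] * opid k l +
    \sum_(r < (mtot l).+1) \sum_(mids <- allseqs r (mbox (mtot l)))
      let c := k :: rcons mids l in
      if all (fun p => (mtot p.1 < mtot p.2)%N && A (mdiff p.2 p.1)) (chain_steps c)
      then M (chain_word c) * \prod_(p <- chain_steps c) Op (mdiff p.2 p.1) p.1 p.2
      else 0.

Definition order_ge2 (h : 'I_nu -> fseries) : Prop :=
  forall i k, (mtot k < 2)%N -> h i k = 0.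
Definition convergent (h : 'I_nu -> fseries) : Prop :=
  exists (c rho : R), 0 < rho /\ forall i k, `|h i k| <= Complex (c * rho ^+ mtot k) 0.

Definition add_closed (A : pred deg) : Prop :=
  forall m n, A m -> A n -> A [ffun i => m i + n i].

End PoincareMoulds.

(* Main.v *)
Require Import Defs.
From mathcomp Require Import all_boot all_order all_algebra.
From mathcomp Require Import all_classical all_reals all_analysis.
From mathcomp.real_closed Require Import complex.
From mathcomp Require Import zify ring lra.
Set Implicit Arguments. Unset Strict Implicit. Unset Printing Implicit Defensive.
Import Order.TTheory GRing.Theory Num.Theory.
Local Open Scope ring_scope.

Section Mbox.
Variable nu : nat.

Lemma mtot_ge (x : mi nu) i : (x i <= mtot x)%N.
Proof. by rewrite /mtot (bigD1 i) //= leq_addr. Qed.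

Lemma mem_mbox N (x : mi nu) : (x \in mbox nu N) = (mtot x <= N)%N.
Proof.
rewrite /mbox mem_filter; case: (leqP (mtot x) N) => H /=; last by [].
apply/mapP; exists [ffun i => inord (x i) : 'I_N.+1]; first by rewrite mem_enum.
apply/ffunP => i; rewrite !ffunE inordK //.
by rewrite ltnS; apply: leq_trans H; apply: mtot_ge.
Qed.

Lemma uniq_mbox N : uniq (mbox nu N).
Proof.
rewrite /mbox filter_uniq // map_inj_uniq ?enum_uniq //.
move=> f g /ffunP E; apply/ffunP => i; apply/val_inj; have := E i; by rewrite !ffunE.
Qed.

Lemma big_mbox (C : nmodType) (F : mi nu -> C) N M : (M <= N)%N ->
  (forall x, (M < mtot x)%N -> F x = 0) ->
  \sum_(x <- mbox nu N) F x = \sum_(x <- mbox nu M) F x.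
Proof.
move=> MN HF; rewrite (bigID (fun x => mtot x <= M)%N) /=.
rewrite [X in _ + X]big1 ?addr0; last by move=> x; rewrite -ltnNge => /HF.
rewrite -big_filter; apply: perm_big; apply: uniq_perm.
- by rewrite filter_uniq // uniq_mbox.
- by apply: uniq_mbox.
move=> x; rewrite mem_filter !mem_mbox; case: leqP => //= H.
by rewrite (leq_trans H MN).
Qed.

Lemma sum_delta (C : pzSemiRingType) (T : eqType) (s : seq T) (x : T) (F : T -> C) :
  uniq s -> \sum_(j <- s) (j == x)%:R * F j = (x \in s)%:R * F x.
Proof.
move=> us; case: (boolP (x \in s)) => xs.
  rewrite (bigD1_seq x) //= eqxx big1 ?addr0 // => j /negbTE ->; by rewrite mul0r.
rewrite mul0r big1_seq // => j /andP [_ js]; case: eqP => [E|]; last by rewrite mul0r.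
by move: xs; rewrite -E js.
Qed.

Lemma big_allseqs0 (C : nmodType) (T : Type) r (s : seq T) (F : seq T -> C) :
  (forall t, size t = r -> F t = 0) -> \sum_(t <- allseqs r s) F t = 0.
Proof.
elim: r F => [|r IH] F HF /=; first by rewrite big_seq1 HF.
rewrite big_allpairs_dep big1 // => x _; apply: IH => t Ht; apply: HF; by rewrite /= Ht.
Qed.
End Mbox.

Section Mould.
Variables (R : realType) (nu : nat) (P : pred (deg nu)) (Op : deg nu -> op R nu).
Local Notation C := R[i].
Local Notation mi := (mi nu).
Local Notation deg := (deg nu).

Definition ms (M : seq deg -> C) : op R nu := mould_sum P M Op.
Definition stepc (k x : mi) := (mtot k < mtot x)%N && P (mdiff x k).
Definition shiftM (M : seq deg -> C) (a : deg) : seq deg -> C := fun w => M (rcons w a).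

Definition body (M : seq deg -> C) (k l : mi) (mids : seq mi) : C :=
  let c := k :: rcons mids l in
      if all (fun p => (mtot p.1 < mtot p.2)%N && P (mdiff p.2 p.1)) (chain_steps c)
      then M (chain_word c) * \prod_(p <- chain_steps c) Op (mdiff p.2 p.1) p.1 p.2
      else 0.
Definition msS M k l := \sum_(r < (mtot l).+1)
  \sum_(mids <- allseqs r (mbox nu (mtot l))) body M k l mids.

Lemma msE M k l : ms M k l = M [::] * opid R k l + msS M k l.
Proof. by []. Qed.

Lemma chain_steps_cons (a b : mi) s :
  chain_steps (a :: b :: s) = (a, b) :: chain_steps (b :: s).
Proof. by []. Qed.

Lemma chain_inc (a : mi) s :
  all (fun p => (mtot p.1 < mtot p.2)%N && P (mdiff p.2 p.1)) (chain_steps (a :: s)) ->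
  (mtot a + size s <= mtot (last a s))%N.
Proof.
elim: s a => [|b s IH] a; first by rewrite /= addn0.
rewrite chain_steps_cons /= => /andP [/andP [ab _] H].
have := IH b H; lia.
Qed.

Lemma body0 M k l mids : (mtot l < mtot k + (size mids).+1)%N -> body M k l mids = 0.
Proof.
rewrite /body; case: ifP => // H; have := chain_inc H.
rewrite size_rcons last_rcons; lia.
Qed.

Lemma body_nil M k l :
  body M k l [::] = if stepc k l then M [:: mdiff l k] * Op (mdiff l k) k l else 0.
Proof. by rewrite /body /chain_word /chain_steps /= big_seq1 andbT. Qed.

Lemma body_cons M k l x t :
  body M k l (x :: t) = if stepc k x then
     Op (mdiff x k) k x * body (shiftM M (mdiff x k)) x l t else 0.
Proof.
rewrite /body /= -/(chain_steps (x :: rcons t l)) /stepc.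
case: ((mtot k < mtot x)%N && P (mdiff x k)) => //=.
case: ifP => _; last by rewrite mulr0.
rewrite chain_steps_cons big_cons /chain_word chain_steps_cons /= rev_cons /shiftM /=.
by rewrite mulrCA.
Qed.

Lemma msS_rec M k l : msS M k l = body M k l [::] +
  \sum_(x <- mbox nu (mtot l)) (if stepc k x then
     Op (mdiff x k) k x * msS (shiftM M (mdiff x k)) x l else 0).
Proof.
rewrite /msS big_ord_recl /= big_seq1; congr (_ + _).
under eq_bigr do rewrite big_allpairs_dep.
rewrite exchange_big /=; apply: eq_bigr => x _.
under eq_bigr do under eq_bigr do rewrite body_cons.
case: ifP => _; last by rewrite big1 // => i _; rewrite big1.
rewrite big_ord_recr /= [X in _ + X]big_allseqs0 ?addr0; last first.
  by move=> t Ht; rewrite body0 // Ht; lia.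
rewrite mulr_sumr; apply: eq_bigr => i _; by rewrite mulr_sumr.
Qed.

Lemma msR M k l : ms M k l = M [::] * opid R k l +
  \sum_(x <- mbox nu (mtot l)) (if stepc k x then
     Op (mdiff x k) k x * ms (shiftM M (mdiff x k)) x l else 0).
Proof.
rewrite msE msS_rec; congr (_ + _).
under [in RHS]eq_bigr do rewrite msE.
rewrite [RHS](eq_bigr (fun x => (if stepc k x then Op (mdiff x k) k x * (shiftM M (mdiff x k) [::] * opid R x l) else 0) + (if stepc k x then Op (mdiff x k) k x * msS (shiftM M (mdiff x k)) x l else 0))); last first.
  by move=> x _; case: ifP; rewrite ?mulrDr ?addr0.
rewrite big_split /=; congr (_ + _).
rewrite body_nil.
rewrite (eq_bigr (fun x => (x == l)%:R * (if stepc k x then Op (mdiff x k) k x * M [:: mdiff x k] else 0))); last first.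
  move=> x _; rewrite /opid /shiftM /=.
  case: eqP => [->|_]; case: ifP => _; by rewrite ?mul1r ?mulr1 ?mul0r ?mulr0.
rewrite sum_delta ?uniq_mbox // mem_mbox leqnn mul1r.
by case: ifP => _ //; rewrite mulrC.
Qed.

Lemma msS_low M k l : (mtot l <= mtot k)%N -> msS M k l = 0.
Proof.
move=> H; rewrite /msS big1 // => r _; rewrite big1 // => t _.
by rewrite body0 //; lia.
Qed.

Lemma ms_low M k l : (mtot l <= mtot k)%N -> ms M k l = M [::] * opid R k l.
Proof. by move=> H; rewrite msE msS_low // addr0. Qed.

Lemma ms_lt M k l : (mtot l < mtot k)%N -> ms M k l = 0.
Proof.
move=> H; rewrite ms_low ?(ltnW H) // /opid; case: eqP => [E|_]; last by rewrite mulr0.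
by move: H; rewrite E ltnn.
Qed.

Lemma msRN N M k l : (mtot l <= N)%N -> ms M k l = M [::] * opid R k l +
  \sum_(x <- mbox nu N) (if stepc k x then
     Op (mdiff x k) k x * ms (shiftM M (mdiff x k)) x l else 0).
Proof.
move=> H; rewrite msR (big_mbox H) // => x Hx.
by rewrite ms_lt // mulr0; case: ifP.
Qed.

Lemma body_lin a b M N k l mids :
  body (fun w => a * M w + b * N w) k l mids = a * body M k l mids + b * body N k l mids.
Proof.
rewrite /body; case: ifP => _; last by rewrite !mulr0 addr0.
by rewrite mulrDl !mulrA.
Qed.

Lemma ms_lin a b M N k l :
  ms (fun w => a * M w + b * N w) k l = a * ms M k l + b * ms N k l.
Proof.
rewrite !msE.
have -> : msS (fun w => a * M w + b * N w) k l = a * msS M k l + b * msS N k l.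
  rewrite /msS !mulr_sumr -big_split; apply: eq_bigr => r _.
  rewrite !mulr_sumr -big_split; apply: eq_bigr => t _; apply: body_lin.
ring.
Qed.

Lemma ms_ext M N k l : M =1 N -> ms M k l = ms N k l.
Proof. by move=> /funext ->. Qed.

Lemma ms0 k l : ms (fun _ => 0) k l = 0.
Proof.
rewrite msE mul0r add0r /msS big1 // => r _; rewrite big1 // => t _.
by rewrite /body; case: ifP; rewrite ?mul0r.
Qed.

Lemma ms_scale a M k l : ms (fun w => a * M w) k l = a * ms M k l.
Proof.
rewrite -[RHS]addr0 -(mul0r (ms M k l)) -ms_lin; apply: ms_ext => w; ring.
Qed.

Lemma ms_add M N k l : ms (fun w => M w + N w) k l = ms M k l + ms N k l.
Proof.
rewrite -[ms M k l]mul1r -[ms N k l]mul1r -ms_lin; apply: ms_ext => w; ring.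
Qed.

Lemma ms_sum n (F : nat -> seq deg -> C) k l :
  ms (fun w => \sum_(i < n) F i w) k l = \sum_(i < n) ms (F i) k l.
Proof.
elim: n => [|n IH].
  transitivity (ms (fun _ => 0) k l); last by rewrite ms0 big_ord0.
  by apply: ms_ext => w; rewrite big_ord0.
rewrite big_ord_recr /= -IH -ms_add; apply: ms_ext => w; by rewrite big_ord_recr.
Qed.


Definition Qm (M N : seq deg -> C) : seq deg -> C :=
  fun w => \sum_(i < (size w).+1) M (take i w) * N (drop i w).
Definition d0 : seq deg -> C := fun w => (size w == 0%N)%:R.
Definition Mpow M n := iter n (Qm M) d0.

Lemma Qm_nil M N : Qm M N [::] = M [::] * N [::].
Proof. by rewrite /Qm big_ord_recl big_ord0 addr0. Qed.

Lemma Qm_shift M N a w :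
  shiftM (Qm M N) a w = N [::] * shiftM M a w + Qm M (shiftM N a) w.
Proof.
rewrite /shiftM /Qm size_rcons big_ord_recr /=.
rewrite take_oversize ?size_rcons // drop_oversize ?size_rcons //.
rewrite addrC mulrC; congr (_ + _); apply: eq_bigr => i _.
have Hi : (i <= size w)%N by have := ltn_ord i.
by rewrite /= drop_rcons // -cats1 takel_cat.
Qed.

Lemma ms_comp M N k l : opcomp (ms M) (ms N) k l = ms (Qm M N) k l.
Proof.
have [n Hn] := ubnP (mtot l - mtot k).
elim: n N k l Hn => // n IH N k l Hn.
case: (ltnP (mtot l) (mtot k)) => Hkl.
  rewrite ms_lt // /opcomp big1_seq // => j /andP [_ Hj].
  by rewrite ms_lt ?mul0r //; rewrite mem_mbox in Hj; lia.
rewrite /opcomp.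
rewrite (eq_big_seq (fun j => (N [::] * opid R k j + \sum_(x <- mbox nu (mtot l))
   (if stepc k x then Op (mdiff x k) k x * ms (shiftM N (mdiff x k)) x j else 0))
   * ms M j l)); last first.
  by move=> j; rewrite mem_mbox => Hj; rewrite (@msRN (mtot l) N k j Hj).
under eq_bigr do rewrite mulrDl.
rewrite big_split /=.
rewrite (eq_bigr (fun j => (j == k)%:R * (N [::] * ms M j l))); last first.
  by move=> j _; rewrite /opid eq_sym mulrA [_ * N _]mulrC.
rewrite sum_delta ?uniq_mbox // mem_mbox Hkl mul1r.
under eq_bigr do rewrite mulr_suml.
rewrite exchange_big /=.
rewrite (eq_big_seq (fun x => if stepc k x then Op (mdiff x k) k x *
   ms (Qm M (shiftM N (mdiff x k))) x l else 0)); last first.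
  move=> x; rewrite mem_mbox => Hx; case: ifP => Hs; last by rewrite big1 // => j _; rewrite mul0r.
  rewrite -IH; last by move: Hs; rewrite /stepc => /andP [Hs _]; lia.
  by rewrite /opcomp mulr_sumr; apply: eq_bigr => j _; rewrite mulrA.
rewrite (@msRN (mtot l) M k l (leqnn _)) (@msRN (mtot l) (Qm M N) k l (leqnn _)).
rewrite Qm_nil mulrDr !mulr_sumr -addrA -big_split /=.
rewrite mulrCA -mulrA; congr (_ + _); apply: eq_bigr => x _.
case: ifP => _; last by rewrite mulr0 addr0.
rewrite (@ms_ext (shiftM (Qm M N) (mdiff x k))
   (fun w => N [::] * shiftM M (mdiff x k) w + 1 * Qm M (shiftM N (mdiff x k)) w)); last first.
  by move=> w; rewrite Qm_shift mul1r.
rewrite ms_lin mul1r; ring.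
Qed.

Lemma ms_d0 k l : ms d0 k l = opid R k l.
Proof.
rewrite msR /d0 /= mul1r big1 ?addr0 // => x _.
case: ifP => _ //.
rewrite (@ms_ext _ (fun _ => 0)) ?ms0 ?mulr0 // => w.
by rewrite /shiftM size_rcons.
Qed.

Lemma ms_pow M n k l : oppow (ms M) n k l = ms (Mpow M n) k l.
Proof.
elim: n k l => [|n IH] k l; first by rewrite /= ms_d0.
rewrite /= -/(oppow (ms M) n) -ms_comp /opcomp.

by apply: eq_bigr => j _; rewrite IH.
Qed.


Definition dzero : deg := [ffun _ => 0].
Definition dadd (m n : deg) : deg := [ffun i => m i + n i].
Definition wsum (w : seq deg) : deg := foldr dadd dzero w.

Lemma wsum_rcons w a : wsum (rcons w a) = dadd (wsum w) a.
Proof.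
elim: w => [|b w IH] /=; first by apply/ffunP => i; rewrite !ffunE addr0 add0r.
rewrite IH; apply/ffunP => i; rewrite !ffunE; ring.
Qed.

Lemma mdiff_kk (k : mi) : mdiff k k = dzero.
Proof. by apply/ffunP => i; rewrite !ffunE subrr. Qed.

Lemma mdiff_add (l x k : mi) : dadd (mdiff l x) (mdiff x k) = mdiff l k.
Proof. apply/ffunP => i; rewrite !ffunE; ring. Qed.

Lemma ms_filter (phi : deg -> C) M k l :
  ms (fun w => phi (wsum w) * M w) k l = phi (mdiff l k) * ms M k l.
Proof.
have [n Hn] := ubnP (mtot l - mtot k).
elim: n phi M k l Hn => // n IH phi M k l Hn.
case: (ltnP (mtot l) (mtot k)) => Hkl; first by rewrite !ms_lt // mulr0.
rewrite !(@msRN (mtot l) _ k l (leqnn _)) mulrDr mulr_sumr; congr (_ + _).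
  rewrite /opid; case: eqP => [->|_]; last by rewrite !mulr0.
  by rewrite mdiff_kk /= mulrA.
apply: eq_big_seq => x; rewrite mem_mbox => Hx; case: ifP => Hs; last by rewrite mulr0.
have E : ms (shiftM (fun w => phi (wsum w) * M w) (mdiff x k)) x l =
   phi (mdiff l k) * ms (shiftM M (mdiff x k)) x l.
  rewrite -(mdiff_add l x k) -(IH (fun m => phi (dadd m (mdiff x k)))).
    by apply: ms_ext => w; rewrite /shiftM wsum_rcons.
  by move: Hs; rewrite /stepc => /andP [Hs _]; lia.
by rewrite E mulrCA.
Qed.

Lemma ms_local F G k l : (forall w, (size w <= mtot l - mtot k)%N -> F w = G w) ->
  ms F k l = ms G k l.
Proof.
have [n Hn] := ubnP (mtot l - mtot k).
elim: n F G k l Hn => // n IH F G k l Hn HFG.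
case: (ltnP (mtot l) (mtot k)) => Hkl; first by rewrite !ms_lt.
rewrite !(@msRN (mtot l) _ k l (leqnn _)) HFG //; congr (_ + _).
apply: eq_big_seq => x; rewrite mem_mbox => Hx; case: ifP => Hs //.
move: Hs; rewrite /stepc => /andP [Hs _].
rewrite (IH _ (shiftM G (mdiff x k))) //; first by lia.
move=> w Hw; rewrite /shiftM HFG // size_rcons; lia.
Qed.

Lemma Mpow_small M n w : M [::] = 0 -> (size w < n)%N -> Mpow M n w = 0.
Proof.
move=> M0; elim: n w => // n IH w Hw /=.
rewrite -/(Mpow M n) /Qm big1 // => i _.
case: (posnP i) => [->|Hi]; first by rewrite take0 M0 mul0r.
rewrite IH ?mulr0 // size_drop; have := ltn_ord i; move: Hi Hw; move: (i : nat) => j; lia.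
Qed.

Lemma sum_trunc (f : nat -> C) m b : (forall n, (m < n)%N -> f n = 0) -> (m < b)%N ->
  \sum_(n < b) f n = \sum_(n < m.+1) f n.
Proof.
move=> Hf Hb; rewrite -!(big_mkord xpredT) (@big_cat_nat _ _ _ m.+1) //=.
rewrite [X in _ + X]big1_seq ?addr0 // => i /andP [_ Hi].
by rewrite mem_index_iota in Hi; apply: Hf; lia.
Qed.

Lemma ms_series M (c : nat -> C) k l : M [::] = 0 ->
  \sum_(n < (mtot l - mtot k).+1) c n * oppow (ms M) n k l =
  ms (fun w => \sum_(n < (size w).+1) c n * Mpow M n w) k l.
Proof.
move=> M0.
transitivity (ms (fun w => \sum_(n < (mtot l - mtot k).+1) c n * Mpow M n w) k l).
  by rewrite (@ms_sum _ (fun n w => c n * Mpow M n w)); apply: eq_bigr => i _; rewrite ms_scale ms_pow.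
apply: ms_local => w Hw; apply: (@sum_trunc (fun n => c n * Mpow M n w) (size w)) => //.
by move=> n Hn; rewrite Mpow_small ?mulr0.
Qed.

End Mould.

Section Step.
Variables (R : realType) (nu : nat).
Local Notation C := R[i].
Local Notation mi := (mi nu).
Local Notation deg := (deg nu).

Lemma cexpD (a b : C) : cexp (a + b) = cexp a * cexp b.
Proof.
case: a => a1 a2; case: b => b1 b2; rewrite /cexp /=.
rewrite expRD cosD sinD; congr Complex; ring.
Qed.

Lemma cexp0 : cexp (0 : C) = 1.
Proof. by rewrite /cexp /= expR0 cos0 sin0 mul1r mulr0. Qed.

Lemma cexp_neq0 (z : C) : cexp z != 0.
Proof.
apply/eqP => H; have := cexpD z (- z); rewrite subrr cexp0 H mul0r.
by move/eqP; rewrite oner_eq0.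
Qed.

Variable lam : 'I_nu -> C.

Lemma elam_add (m n : deg) : elam lam (dadd m n) = elam lam m * elam lam n.
Proof.
rewrite /elam -cexpD -big_split /=; congr cexp; apply: eq_bigr => i _.
by rewrite ffunE intrD mulrDr.
Qed.

Lemma elam0 : elam lam (dzero nu) = 1.
Proof. by rewrite /elam big1 ?cexp0 // => i _; rewrite ffunE mulr0. Qed.

Lemma elam_neq0 m : elam lam m != 0.
Proof. exact: cexp_neq0. Qed.

Lemma elam_mdeg (i l : mi) : elam lam (mdeg l) = elam lam (mdeg i) * elam lam (mdiff l i).
Proof.
rewrite -elam_add; congr elam; apply/ffunP => x; rewrite !ffunE.
by rewrite addrC subrK.
Qed.

Lemma FlinL (T : op R nu) k l : opcomp (Flin lam) T k l = T k l * elam lam (mdeg l).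
Proof.
rewrite /opcomp /Flin (eq_bigr (fun j => (j == l)%:R * (T k j * elam lam (mdeg j)))).
  by rewrite sum_delta ?uniq_mbox // mem_mbox leqnn mul1r.
by move=> j _; rewrite mulrCA.
Qed.

Lemma FlininvL (T : op R nu) k l : opcomp (Flininv lam) T k l = T k l / elam lam (mdeg l).
Proof.
rewrite /opcomp /Flininv (eq_bigr (fun j => (j == l)%:R * (T k j / elam lam (mdeg j)))).
  by rewrite sum_delta ?uniq_mbox // mem_mbox leqnn mul1r.
by move=> j _; rewrite mulrCA.
Qed.

Definition MExp (M : seq deg -> C) : seq deg -> C :=
  fun w => \sum_(n < (size w).+1) (n`!%:R)^-1 * Mpow M n w.
Definition MLog (M : seq deg -> C) : seq deg -> C :=
  fun w => \sum_(n < (size w).+1) ((-1) ^+ n.+1 / n%:R) * Mpow M n w.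

Lemma MExp_nil M : MExp M [::] = 1.
Proof. by rewrite /MExp big_ord1 /= /d0 /= mulr1 invr1. Qed.
Lemma MLog_nil M : MLog M [::] = 0.
Proof. by rewrite /MLog big_ord1 /= invr0 mulr0 mul0r. Qed.

Variables (P : pred deg) (Op : deg -> op R nu).
Local Notation ms := (ms P Op).

Lemma opexp_ms M k l : M [::] = 0 -> opexp (ms M) k l = ms (MExp M) k l.
Proof.
move=> M0; rewrite /opexp /MExp -(@ms_series _ _ P Op M (fun n => (n`!%:R)^-1) k l M0); apply: eq_bigr => n _; by rewrite mulrC.
Qed.

Lemma oplog_ms M k l : M [::] = 0 -> oplog (ms M) k l = ms (MLog M) k l.
Proof.
move=> M0; rewrite /oplog /MLog -(@ms_series _ _ P Op M (fun n => (-1) ^+ n.+1 / n%:R) k l M0) big_mkcond /=; apply: eq_bigr => n _.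
case: (posnP n) => [->|Hn] /=; first by rewrite invr0 !mulr0 mul0r.
by rewrite mulrAC.
Qed.

Lemma step_gen M G : M [::] = 1 -> G = opcomp (Flin lam) (ms M) ->
  exists M', M' [::] = 1 /\ PoinStep lam G = opcomp (Flin lam) (ms M').
Proof.
move=> M1 EG.
pose M0 := fun w => 1 * M w + (-1) * d0 R w.
have M00 : M0 [::] = 0 by rewrite /M0 M1 /d0 /=; ring.
have EB : Bpart lam G = ms M0.
  apply/funext => k; apply/funext => l.
  rewrite /Bpart /opadd /opopp FlininvL EG FlinL mulfK ?elam_neq0 //.
  by rewrite /M0 ms_lin ms_d0; ring.
have ED : forall k l, Dpart lam G k l = ms (MLog M0) k l.
  by move=> k l; rewrite /Dpart EB oplog_ms.
pose phi := fun m : deg => match Kmin lam G with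
  | Some K => if (dtot m == K%:Z) && (elam lam m != 1) then (1 - elam lam m)^-1 else 0
  | None => 0 end.
pose S := fun w => phi (wsum w) * MLog M0 w.
have S0 : S [::] = 0 by rewrite /S MLog_nil mulr0.
have ES : Sop lam G = ms S.
  apply/funext => k; apply/funext => l.
  rewrite /S ms_filter -ED /Sop /phi /Defs.hom eqxx.
  case: (Kmin lam G) => [K|]; last by rewrite mul0r.
  by case: ifP => _; rewrite ?mul0r // mulrC.
have ESn : opopp (Sop lam G) = ms (fun w => - S w).
  apply/funext => k; apply/funext => l.
  rewrite ES /opopp -mulN1r -ms_scale; apply: ms_ext => w; by rewrite mulN1r.
have SN0 : (fun w => - S w) [::] = 0 by rewrite /= S0 oppr0.
pose X' := fun w => (elam lam (wsum w))^-1 * MExp S w.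
exists (Qm (Qm X' M) (MExp (fun w => - S w))); split.
  by rewrite !Qm_nil MExp_nil /X' MExp_nil /= elam0 invr1 M1 !mulr1.
apply/funext => k; apply/funext => l.
rewrite FlinL /PoinStep ESn /opcomp.
have EL : forall j, \sum_(i <- mbox nu (mtot l)) G j i * opexp (Sop lam G) i l =
   elam lam (mdeg l) * ms (Qm X' M) j l.
  move=> j; rewrite -ms_comp /opcomp mulr_sumr; apply: eq_bigr => i _.
  rewrite ES opexp_ms // EG FlinL /X' (ms_filter P Op (fun m => (elam lam m)^-1)) (elam_mdeg i l).
  by field; rewrite elam_neq0.
under eq_bigr do rewrite EL opexp_ms //.
rewrite -ms_comp /opcomp mulr_suml; apply: eq_bigr => j _; ring.
Qed.

End Step.

Section ExpLog.
Variable F : numFieldType.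

Definition cl (p : nat) : F := (-1) ^+ p.+1 / p%:R.
Definition Lp (N : nat) : {poly F} := \poly_(p < N.+1) cl p.
Definition Ep (N : nat) : {poly F} := \sum_(n < N.+1) (n`!%:R)^-1 *: (Lp N) ^+ n.
Definition E0p (N : nat) : {poly F} := \sum_(n < N) (n`!%:R)^-1 *: (Lp N) ^+ n.

Lemma cl0 : cl 0 = 0.
Proof. by rewrite /cl invr0 mulr0. Qed.

Lemma Lp_val N n j : (j < n)%N -> ((Lp N) ^+ n)`_j = 0.
Proof.
elim: n j => // n IH j Hj; rewrite exprS coefM big1 // => i _.
case: (posnP i) => [->|Hi].
  by rewrite /Lp coef_poly /= cl0 mul0r.
by rewrite IH ?mulr0 //; have := ltn_ord i; lia.
Qed.

Lemma dLp N i : (i < N)%N -> (Lp N)^`()`_i = (-1) ^+ i.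
Proof.
move=> Hi; rewrite coef_deriv /Lp coef_poly ltnS Hi /cl -(mulr_natr ((-1)^+i.+2 / i.+1%:R) i.+1) mulfVK //.
by rewrite !exprS !mulN1r opprK.
Qed.

Lemma XdLp N i : (i < N)%N -> ((1 + 'X) * (Lp N)^`())`_i = (i == 0%N)%:R.
Proof.
move=> Hi; rewrite mulrDl mul1r coefD coefXM dLp //.
case: i Hi => [|i] Hi /=; first by rewrite expr0 addr0.
by rewrite dLp ?exprS ?mulN1r ?addNr //; lia.
Qed.

Lemma Ep_E0p N : Ep N = E0p N + (N`!%:R)^-1 *: (Lp N) ^+ N.
Proof. by rewrite /Ep big_ord_recr. Qed.

Lemma E0p_coef N i : (i < N)%N -> (E0p N)`_i = (Ep N)`_i.
Proof. by move=> Hi; rewrite Ep_E0p coefD coefZ Lp_val // mulr0 addr0. Qed.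

Lemma Ep_deriv N i : ((Lp N)^`() * E0p N)`_i = (Ep N)`_i.+1 *+ i.+1.
Proof.
rewrite /Ep coef_sum -sumrMnl big_ord_recl /= expr0 coefZ coef1 /= mulr0 mul0rn add0r.
rewrite /E0p mulr_sumr coef_sum; apply: eq_bigr => n _.
rewrite /bump /= add1n -scalerAr !coefZ -mulrnAr -coef_deriv deriv_exp /= coefMn mulrnAr -mulrnAl.
congr (_ * _); rewrite factS natrM invfM.
by rewrite -(mulr_natl ((n.+1)%:R^-1 * n`!%:R^-1) n.+1) mulrA mulfV ?mul1r.
Qed.

Lemma Ep_rec N i : (i < N)%N ->
  (Ep N)`_i.+1 *+ i.+1 + (if i == 0%N then 0 else (Ep N)`_i *+ i) = (Ep N)`_i.
Proof.
move=> Hi.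
have H1 : ((1 + 'X) * ((Lp N)^`() * E0p N))`_i = (Ep N)`_i.
  rewrite mulrA coefM (bigD1 ord0) //= subn0 XdLp; last by lia.
  rewrite /= mulr1n mul1r big1 ?addr0; first by rewrite E0p_coef.
  move=> j /eqP Hj; rewrite XdLp; last by have := ltn_ord j; lia.
  case: eqP => [E|_]; last by rewrite mul0r.
  by case: Hj; apply: val_inj.
transitivity (((1 + 'X) * ((Lp N)^`() * E0p N))`_i); last exact: H1.
rewrite mulrDl mul1r coefD coefXM Ep_deriv; congr (_ + _).
by case: i Hi {H1} => // i Hi /=; rewrite Ep_deriv.
Qed.

Lemma Ep0 N : (Ep N)`_0 = 1.
Proof.
rewrite /Ep coef_sum big_ord_recl /= big1 ?addr0.
  by rewrite expr0 coefZ coef1 /= mulr1 invr1.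
by move=> i _; rewrite coefZ Lp_val ?mulr0.
Qed.

Lemma Ep_coef N i : (i <= N)%N -> (Ep N)`_i = (i <= 1)%N%:R.
Proof.
elim: i => [|i IH] Hi; first by rewrite Ep0.
have := Ep_rec Hi; rewrite IH ?(ltnW Hi) //.
case: i {IH Hi} => [|j] H.
  by move: H; rewrite /= mulr1n addr0.
have H2 : (Ep N)`_j.+2 *+ j.+2 = 0.
  case: j H => [|j] H.
    by move: H; rewrite /= mulr1n => /eqP; rewrite -subr_eq0 addrK => /eqP.
  by move: H; rewrite /= mul0rn addr0.
by apply/eqP; move/eqP: H2; rewrite mulrn_eq0.
Qed.

End ExpLog.

Section MouldCoefs.
Variables (R : realType) (nu : nat).
Local Notation C := R[i].
Local Notation deg := (deg nu).

Definition M1 : seq deg -> C := fun w => (size w == 1%N)%:R.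
Definition Lam : seq deg -> C := fun w => cl C (size w).

Lemma size_take_le (T : Type) (s : seq T) i : (i <= size s)%N -> size (take i s) = i.
Proof. by move=> H; rewrite size_take; case: ltnP => // H2; apply/eqP; rewrite eqn_leq H2 H. Qed.

Lemma sum_sizeE (c : nat -> C) (w : seq deg) :
  \sum_(n < (size w).+1) c n * (size w == n)%:R = c (size w).
Proof.
rewrite (bigD1 ord_max) //= eqxx mulr1 big1 ?addr0 // => i Hi.
rewrite (_ : (size w == i) = false) ?mulr0 //; apply/negbTE.
by apply: contra Hi => /eqP E; apply/eqP; apply: val_inj => /=; exact/esym.
Qed.

Lemma Mpow_M1 n w : Mpow M1 n w = (size w == n)%:R.
Proof.
elim: n w => [|n IH] w //=.
rewrite -/(Mpow M1 n) /Qm.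
rewrite (eq_bigr (fun i : 'I_(size w).+1 => (nat_of_ord i == 1%N)%:R * ((size w - i)%N == n)%:R)); last first.
  move=> i _; have Hi : (i <= size w)%N by rewrite -ltnS ltn_ord.
  by rewrite /M1 IH size_drop size_take_le.
rewrite -(big_mkord xpredT (fun i => (i == 1%N)%:R * ((size w - i)%N == n)%:R)).
rewrite sum_delta ?iota_uniq // mem_index_iota.
by case: (size w) => [|s] //=; rewrite ?mul0r ?mul1r ?subn1.
Qed.

Lemma MLog_M1 w : MLog M1 w = Lam w.
Proof.
rewrite /MLog (eq_bigr (fun n : 'I_(size w).+1 => cl C n * (size w == n)%:R)) ?sum_sizeE //.
by move=> n _; rewrite Mpow_M1.
Qed.

Lemma MExp_M1 w : MExp M1 w = ((size w)`!%:R)^-1.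
Proof.
rewrite /MExp; under eq_bigr do rewrite Mpow_M1.
exact: (@sum_sizeE (fun n => (n`!%:R)^-1 : C) w).
Qed.

Lemma Mpow_Lam N n w : (size w <= N)%N -> Mpow Lam n w = ((Lp C N) ^+ n)`_(size w).
Proof.
elim: n w => [|n IH] w Hw; first by rewrite /= /d0 coef1.
rewrite [Mpow _ _ _]/= -/(Mpow Lam n) /Qm exprS coefM.
apply: eq_bigr => i _.
have Hi' : (i <= size w)%N by rewrite -ltnS.
rewrite IH; last by rewrite size_drop leq_subLR (leq_trans Hw) // leq_addl.
rewrite size_drop /Lam size_take_le // /Lp coef_poly ltnS (leq_trans Hi' Hw) //.
Qed.

Lemma MExp_Lam w : MExp Lam w = (size w <= 1)%N%:R.
Proof.
rewrite -(@Ep_coef C (size w) (size w)) // /MExp /Ep coef_sum.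
by apply: eq_bigr => n _; rewrite coefZ (@Mpow_Lam (size w)).
Qed.

Lemma d0M1 w : d0 R w + M1 w = MExp Lam w.
Proof. by rewrite MExp_Lam /d0 /M1; case: (size w) => [|[|s]] /=; rewrite ?addr0 ?add0r. Qed.

End MouldCoefs.

Section Lead.
Variables (R : realType) (nu : nat).
Local Notation C := R[i].
Local Notation mi := (mi nu).

Definition Lead (a : fseries R nu) (d : nat) (c : C) (k0 : mi) :=
  mtot k0 = d /\ forall l, (mtot l <= d)%N -> a l = (l == k0)%:R * c.

Definition madd (a b : mi) : mi := [ffun i => (a i + b i)%N].
Definition msub (a b : mi) : mi := [ffun i => (a i - b i)%N].
Definition mscale (n : nat) (a : mi) : mi := [ffun i => (n * a i)%N].

Lemma mtot_add a b : mtot (madd a b) = (mtot a + mtot b)%N.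
Proof. by rewrite /mtot -big_split; apply: eq_bigr => i _; rewrite ffunE. Qed.

Lemma mtot_le (a b : mi) : [forall i, a i <= b i]%N -> (mtot a <= mtot b)%N.
Proof. by move=> /forallP H; apply: leq_sum => i _; apply: H. Qed.

Lemma mtot_sub (l j : mi) : [forall i, j i <= l i]%N -> mtot (msub l j) = (mtot l - mtot j)%N.
Proof.
move=> H; have E : (mtot (msub l j) + mtot j)%N = mtot l.
  rewrite /mtot -big_split; apply: eq_bigr => i _ /=; rewrite ffunE subnK //.
  by move/forallP: H; apply.
by rewrite -E addnK.
Qed.

Lemma Lead_eq a d c k d' c' k' : Lead a d c k -> d = d' -> c = c' -> k = k' -> Lead a d' c' k'.
Proof. by move=> H <- <- <-. Qed.

Lemma sum_filter_delta (T : eqType) (s : seq T) (p : pred T) (x : T) (F : T -> C) :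
  uniq s -> \sum_(j <- s | p j) (j == x)%:R * F j = ((x \in s) && p x)%:R * F x.
Proof.
move=> us; rewrite -big_filter sum_delta ?filter_uniq // mem_filter.
by rewrite andbC.
Qed.

Lemma Lead_smul a b d1 d2 c1 c2 k1 k2 : Lead a d1 c1 k1 -> Lead b d2 c2 k2 ->
  Lead (smul a b) (d1 + d2) (c1 * c2) (madd k1 k2).
Proof.
move=> [Hk1 Ha] [Hk2 Hb]; split; first by rewrite mtot_add Hk1 Hk2.
move=> l Hl; rewrite /smul.
rewrite (eq_bigr (fun j => (j == k1)%:R * (c1 * b (msub l j)))); last first.
  move=> j Hj; case: (leqP (mtot j) d1) => Hj1.
    by rewrite Ha // mulrA.
  have Hjk : (j == k1) = false by apply/negbTE; apply/eqP => E; move: Hj1; rewrite E Hk1 ltnn.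
  rewrite Hjk mul0r.
  have Hs : (mtot (msub l j) < d2)%N.
    rewrite mtot_sub //; have := mtot_le Hj; move: Hl Hj1; clear; lia.
  rewrite /msub in Hs; rewrite Hb ?(ltnW Hs) //.
  have -> : ([ffun i => (l i - j i)%N] == k2) = false.
    by apply/negbTE; apply/eqP => E; move: Hs; rewrite E Hk2 ltnn.
  by rewrite mul0r mulr0.
rewrite sum_filter_delta ?uniq_mbox // mem_mbox.
case: (boolP [forall i, k1 i <= l i]%N) => Hkl; last first.
  rewrite andbF mul0r.
  case: eqP => [E|_]; last by rewrite mul0r.
  case/negP: Hkl; apply/forallP => i; by rewrite E ffunE leq_addr.
rewrite (mtot_le Hkl) /= mul1r.
rewrite Hb; last by rewrite mtot_sub // Hk1 leq_subLR.
have -> : (msub l k1 == k2) = (l == madd k1 k2).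
  apply/eqP/eqP => [E|->].
    apply/ffunP => i; rewrite ffunE -E ffunE subnKC //.
    by move/forallP: Hkl; apply.
  by apply/ffunP => i; rewrite !ffunE addKn.
by rewrite mulrCA.
Qed.

Lemma Lead_sone : Lead (@sone R nu) 0 1 (Defs.mzero nu).
Proof.
split; first by rewrite /mtot big1 // => i _; rewrite ffunE.
by move=> l _; rewrite /sone mulr1.
Qed.

Lemma Lead_spow a d c k n : Lead a d c k -> Lead (spow a n) (n * d) (c ^+ n) (mscale n k).
Proof.
move=> H; elim: n => [|n IH].
  apply: (Lead_eq Lead_sone); [by rewrite mul0n | by [] | by apply/ffunP => i; rewrite !ffunE].
apply: Lead_eq (Lead_smul H IH) _ _ _.
- by rewrite mulSn.
- by rewrite exprS.
- by apply/ffunP => i; rewrite !ffunE mulSn.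
Qed.

Variables (lam : 'I_nu -> C) (h : 'I_nu -> fseries R nu).
Hypothesis hord : order_ge2 h.

Lemma mtot_unit (i : 'I_nu) : mtot (unitmi i) = 1%N.
Proof.
rewrite /mtot (bigD1 i) //= big1 ?ffunE ?eqxx // => j /negbTE Hj.
by rewrite ffunE Hj.
Qed.

Lemma Lead_fcomp i : Lead (fcomp lam h i) 1 (cexp (lam i)) (unitmi i).
Proof.
split; first exact: mtot_unit.
move=> l Hl; have H0 : h i l = 0 by apply: hord; rewrite ltnS.
by rewrite /fcomp H0 addr0 mulrC.
Qed.

Lemma cexp_natmul (z : C) n : cexp (z * n%:R) = cexp z ^+ n.
Proof.
elim: n => [|n IH]; first by rewrite mulr0 cexp0.
by rewrite mulr_natr mulrS cexpD -mulr_natr IH exprS.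
Qed.

Lemma Lead_Fop_gen (k : mi) (s : seq 'I_nu) :
  Lead (foldr (@smul R nu) (@sone R nu) [seq spow (fcomp lam h i) (k i) | i <- s])
    (\sum_(i <- s) k i)%N (\prod_(i <- s) cexp (lam i) ^+ k i)
    [ffun j => \sum_(i <- s) k i * (j == i)]%N.
Proof.
elim: s => [|i s IH] /=.
  apply: (Lead_eq Lead_sone); [by rewrite big_nil | by rewrite big_nil | by apply/ffunP => j; rewrite !ffunE big_nil].
apply: Lead_eq (Lead_smul (Lead_spow (k i) (Lead_fcomp i)) IH) _ _ _.
- by rewrite big_cons muln1.
- by rewrite big_cons.
- by apply/ffunP => j; rewrite !ffunE big_cons eq_sym.
Qed.

Lemma Fop_low (k l : mi) : (mtot l <= mtot k)%N ->
  Fop lam h k l = (l == k)%:R * elam lam (mdeg k).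
Proof.
move=> Hl; have [_ H] := Lead_Fop_gen k (enum 'I_nu).
rewrite /Fop H; last by rewrite big_enum.
congr (_ * _).
  congr (_ %:R); congr (_ == _); apply/ffunP => j; rewrite ffunE big_enum /=.
  rewrite (bigD1 j) //= eqxx muln1 big1 ?addn0 // => i /negbTE.
  by rewrite eq_sym => ->; rewrite muln0.
rewrite big_enum /= /elam.
elim/big_rec2: _ => [|i x y _ ->]; first by rewrite cexp0.
by rewrite cexpD ffunE -pmulrn -cexp_natmul mulr_natr.
Qed.
End Lead.

Section Main.
Variables (R : realType) (nu : nat).
Local Notation C := R[i].
Local Notation mi := (mi nu).
Local Notation deg := (deg nu).
Variables (lam : 'I_nu -> C) (h : 'I_nu -> fseries R nu).

Lemma BpartE (G : op R nu) k l :
  Bpart lam G k l = G k l / elam lam (mdeg l) - opid R k l.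
Proof. by rewrite /Bpart /opadd /opopp FlininvL. Qed.

Lemma Bpart_inc : order_ge2 h -> forall k l,
  Bpart lam (Fop lam h) k l != 0 -> (mtot k < mtot l)%N.
Proof.
move=> hord k l H; rewrite ltnNge; apply/negP => Hl; move/eqP: H; apply.
rewrite BpartE (Fop_low lam hord Hl) /opid eq_sym.
case: eqP => [->|_]; last by rewrite !mul0r subrr.
by rewrite mul1r mulfV ?elam_neq0 // subrr.
Qed.

Lemma ms_M1 (P : pred deg) (Op : deg -> op R nu) :
  (forall k l, Op (mdiff l k) k l != 0 -> stepc P k l) ->
  forall k l, ms P Op (@M1 R nu) k l = Op (mdiff l k) k l.
Proof.
move=> HOp k l; rewrite msR /M1 /= mul0r add0r.
rewrite (eq_bigr (fun x => (x == l)%:R * (if stepc P k x then Op (mdiff x k) k x else 0))); last first.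
  move=> x _; rewrite (@ms_ext _ _ _ _ _ (@d0 R nu)); last first.
    by move=> w; rewrite /shiftM /d0 size_rcons eqSS.
  rewrite ms_d0 /opid; case: ifP => _; last by rewrite mulr0.
  by rewrite mulrC.
rewrite sum_delta ?uniq_mbox // mem_mbox leqnn mul1r.
case: ifP => // Hs; apply/eqP; apply: contraFT Hs => H.
by apply: HOp; rewrite eq_sym.
Qed.

Lemma FPoin_gen (P : pred deg) (Op : deg -> op R nu) :
  (exists M, M [::] = 1 /\ Fop lam h = opcomp (Flin lam) (ms P Op M)) ->
  forall r, exists M, M [::] = 1 /\ FPoin lam h r = opcomp (Flin lam) (ms P Op M).
Proof.
move=> H0; elim => [|r [M [M1 E]]]; first exact: H0.
exact: (step_gen M1 E).
Qed.

Hypothesis hord : order_ge2 h.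
Variables (A Acal : pred deg).
Hypothesis HA : forall n, op_nonzero (Bfam lam h n) -> A n.
Hypothesis HAcal : forall m, op_nonzero (Dfam lam h m) -> Acal m.

Lemma HfamB k l : Bfam lam h (mdiff l k) k l != 0 -> stepc A k l.
Proof.
move=> H; rewrite /stepc; apply/andP; split.
  by apply: Bpart_inc => //; move: H; rewrite /Bfam /Defs.hom eqxx.
by apply: HA; exists k, l.
Qed.

Lemma HfamD k l : Dfam lam h (mdiff l k) k l != 0 -> stepc Acal k l.
Proof.
move=> H; rewrite /stepc; apply/andP; split; last by apply: HAcal; exists k, l.
move: H; rewrite /Dfam /Defs.hom eqxx /Dpart /oplog; apply: contraR.
rewrite -leqNgt -subn_eq0 => /eqP ->.
by rewrite big_mkcond big_ord_recl big_ord0 /= addr0.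
Qed.

Lemma BpartM1 : Bpart lam (Fop lam h) = ms A (Bfam lam h) (@M1 R nu).
Proof.
apply/funext => k; apply/funext => l.
by rewrite (ms_M1 HfamB) /Bfam /Defs.hom eqxx.
Qed.

Lemma baseB : exists M, M [::] = 1 /\
  Fop lam h = opcomp (Flin lam) (ms A (Bfam lam h) M).
Proof.
exists (fun w => 1 * d0 R w + 1 * M1 R w); split; first by rewrite /d0 /M1 /=; ring.
apply/funext => k; apply/funext => l.
rewrite FlinL ms_lin ms_d0 -BpartM1 BpartE !mul1r addrC subrK.
by rewrite mulfVK ?elam_neq0.
Qed.

Lemma baseD : exists M, M [::] = 1 /\
  Fop lam h = opcomp (Flin lam) (ms Acal (Dfam lam h) M).
Proof.
exists (MExp (@M1 R nu)); split; first exact: MExp_nil.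
have ED : Dpart lam (Fop lam h) = ms A (Bfam lam h) (@Lam R nu).
  apply/funext => k; apply/funext => l.
  rewrite /Dpart BpartM1 oplog_ms //.
  by apply: ms_ext => w; rewrite MLog_M1.
have ED2 : ms Acal (Dfam lam h) (@M1 R nu) = Dpart lam (Fop lam h).
  apply/funext => k; apply/funext => l.
  by rewrite (ms_M1 HfamD) /Dfam /Defs.hom eqxx.
apply/funext => k; apply/funext => l.
rewrite FlinL -opexp_ms // ED2 ED opexp_ms; last by rewrite /Lam /= cl0.
rewrite (@ms_ext _ _ _ _ _ (fun w => 1 * d0 R w + 1 * M1 R w)); last first.
  by move=> w; rewrite !mul1r d0M1.
rewrite ms_lin ms_d0 -BpartM1 BpartE !mul1r addrC subrK.
by rewrite mulfVK ?elam_neq0.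
Qed.

End Main.

Unset Implicit Arguments.
Set Strict Implicit.

Theorem mainTheorem9 (R : realType) (nu : nat) (lam : 'I_nu -> R[i])
    (h : 'I_nu -> fseries R nu) :
  (0 < nu)%N -> order_ge2 h -> convergent h ->
  forall (A Acal : pred (deg nu)),
    add_closed A -> add_closed Acal ->
    (forall n, op_nonzero (Bfam lam h n) -> A n) ->
    (forall m, op_nonzero (Dfam lam h m) -> Acal m) ->
  forall r : nat,
  exists (Poin poin : seq (deg nu) -> R[i]),
    FPoin lam h r = opcomp (Flin lam) (mould_sum Acal Poin (Dfam lam h)) /\
    FPoin lam h r = opcomp (Flin lam) (mould_sum A poin (Bfam lam h)).
Proof.
move=> _ hord _ A Acal _ _ HA HAcal r.
have [MD [_ ED]] := FPoin_gen (baseD hord HA HAcal) r.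
have [MB [_ EB]] := FPoin_gen (baseB hord HA) r.
by exists MD, MB.
Qed.
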